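(* Let $\mathcal A$ be cocomplete, $(M,\eta)$ a pointed endofunctor, and $\lambda:M(H\times\mathrm{Id})\to(H\times\mathrm{Id})M$ a distributive law of $(M,\eta)$ over the copointed functor $(H\times\mathrm{Id},\pi_1)$, with $\lambda$-interpretation $b:MC\to C$. Then $c^{-1}\cdot Hb:HMC\to C$ is a completely iterative algebra for $HM$.
   Context: $\mathcal A$ has binary products and coproducts; $H:\mathcal A\to\mathcal A$ is a functor with terminal coalgebra $c:C\to HC$ (an isomorphism by Lambek's lemma). A pointed endofunctor is a functor $M$ with a natural transformation $\eta:\mathrm{Id}\to M$. A distributive law of $(M,\eta)$ over the copointed functor $(D,\varepsilon)=(H\times\mathrm{Id},\pi_1)$ is a natural transformation $\lambda:MD\to DM$ with $\lambda\cdot\eta D=D\eta$ and $\varepsilon M\cdot\lambda=M\varepsilon$. Its $\lambda$-interpretation is the unique $b:MC\to C$ with $c\cdot b=Hb\cdot\pi_0\cdot\lambda_C\cdot M\langle c,\mathrm{id}_C\rangle$; $(C,b)$ then satisfies $b\cdot\eta_C=\mathrm{id}_C$. A $G$-algebra $a:GA\to A$ is a completely iterative algebra if every $e:X\to GX+A$ has a unique $e^\dagger:X\to A$ with $e^\dagger=[a,\mathrm{id}_A]\cdot(Ge^\dagger+\mathrm{id}_A)\cdot e$. *)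

(* Defs.v *)
Set Implicit Arguments.
Unset Strict Implicit.

Record Category := {
  Ob :> Type;
  Hom : Ob -> Ob -> Type;
  comp : forall {X Y Z : Ob}, Hom Y Z -> Hom X Y -> Hom X Z;
  idm : forall X : Ob, Hom X X;
  comp_assoc : forall X Y Z W (f : Hom X Y) (g : Hom Y Z) (h : Hom Z W),
      comp h (comp g f) = comp (comp h g) f;
  comp_id_l : forall X Y (f : Hom X Y), comp (idm Y) f = f;
  comp_id_r : forall X Y (f : Hom X Y), comp f (idm X) = f
}.
Arguments Hom {c} _ _.
Arguments comp {c X Y Z} _ _.
Arguments idm {c} X.
Infix "∘" := comp (at level 40, left associativity).

Record Endofunctor (A : Category) := {
  fob :> A -> A;
  fmap : forall {X Y : A}, Hom X Y -> Hom (fob X) (fob Y);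
  fmap_id : forall X : A, fmap (idm X) = idm (fob X);
  fmap_comp : forall (X Y Z : A) (f : Hom X Y) (g : Hom Y Z),
      fmap (g ∘ f) = fmap g ∘ fmap f
}.
Arguments fmap {A} e {X Y} _.

Definition IdFunctor (A : Category) : Endofunctor A.
Proof.
  refine {| fob := fun X => X; fmap := fun X Y f => f |}; reflexivity.
Defined.

Definition CompFunctor (A : Category) (G F : Endofunctor A) : Endofunctor A.
Proof.
  refine {| fob := fun X => G (F X); fmap := fun X Y f => fmap G (fmap F f) |}.
  - intros X. rewrite !fmap_id. reflexivity.
  - intros X Y Z f g. rewrite !fmap_comp. reflexivity.
Defined.

Record BinProducts (A : Category) := {
  prod : A -> A -> A;
  pi0 : forall X Y : A, Hom (prod X Y) X;
  pi1 : forall X Y : A, Hom (prod X Y) Y;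
  pair : forall {Z X Y : A}, Hom Z X -> Hom Z Y -> Hom Z (prod X Y);
  pair_pi0 : forall Z X Y (f : Hom Z X) (g : Hom Z Y), pi0 X Y ∘ pair f g = f;
  pair_pi1 : forall Z X Y (f : Hom Z X) (g : Hom Z Y), pi1 X Y ∘ pair f g = g;
  pair_uniq : forall Z X Y (f : Hom Z X) (g : Hom Z Y) (h : Hom Z (prod X Y)),
      pi0 X Y ∘ h = f -> pi1 X Y ∘ h = g -> h = pair f g
}.
Arguments prod {A} _ _ _.
Arguments pi0 {A} _ X Y.
Arguments pi1 {A} _ X Y.
Arguments pair {A} _ {Z X Y} _ _.

Definition prod_map (A : Category) (P : BinProducts A) (X X' Y Y' : A)
  (f : Hom X X') (g : Hom Y Y') : Hom (prod P X Y) (prod P X' Y') :=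
  pair P (f ∘ pi0 P X Y) (g ∘ pi1 P X Y).

Record BinCoproducts (A : Category) := {
  coprod : A -> A -> A;
  inl : forall X Y : A, Hom X (coprod X Y);
  inr : forall X Y : A, Hom Y (coprod X Y);
  copair : forall {X Y Z : A}, Hom X Z -> Hom Y Z -> Hom (coprod X Y) Z;
  copair_inl : forall X Y Z (f : Hom X Z) (g : Hom Y Z), copair f g ∘ inl X Y = f;
  copair_inr : forall X Y Z (f : Hom X Z) (g : Hom Y Z), copair f g ∘ inr X Y = g;
  copair_uniq : forall X Y Z (f : Hom X Z) (g : Hom Y Z) (h : Hom (coprod X Y) Z),
      h ∘ inl X Y = f -> h ∘ inr X Y = g -> h = copair f g
}.
Arguments coprod {A} _ _ _.
Arguments inl {A} _ X Y.
Arguments inr {A} _ X Y.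
Arguments copair {A} _ {X Y Z} _ _.

Definition coprod_map (A : Category) (S : BinCoproducts A) (X X' Y Y' : A)
  (f : Hom X X') (g : Hom Y Y') : Hom (coprod S X Y) (coprod S X' Y') :=
  copair S (inl S X' Y' ∘ f) (inr S X' Y' ∘ g).

Record SmallCategory := {
  sOb : Set;
  sHom : sOb -> sOb -> Set;
  scomp : forall {i j k : sOb}, sHom j k -> sHom i j -> sHom i k;
  sid : forall i : sOb, sHom i i;
  scomp_assoc : forall i j k l (u : sHom i j) (v : sHom j k) (w : sHom k l),
      scomp w (scomp v u) = scomp (scomp w v) u;
  scomp_id_l : forall i j (u : sHom i j), scomp (sid j) u = u;
  scomp_id_r : forall i j (u : sHom i j), scomp u (sid i) = u
}.
Arguments sHom {s} _ _.
Arguments scomp {s i j k} _ _.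
Arguments sid {s} i.

Record Diagram (J : SmallCategory) (A : Category) := {
  dob : sOb J -> A;
  dmap : forall {i j : sOb J}, sHom i j -> Hom (dob i) (dob j);
  dmap_id : forall i, dmap (sid i) = idm (dob i);
  dmap_comp : forall i j k (u : sHom i j) (v : sHom j k),
      dmap (scomp v u) = dmap v ∘ dmap u
}.
Arguments dob {J A} d _.
Arguments dmap {J A} d {i j} _.

Definition is_cocone {J : SmallCategory} {A : Category} (D : Diagram J A)
  (L : A) (x : forall i, Hom (dob D i) L) : Prop :=
  forall i j (u : sHom i j), x j ∘ dmap D u = x i.
Arguments is_cocone {J A} D L x.

Definition has_colimit (J : SmallCategory) (A : Category) (D : Diagram J A) : Prop :=
  exists (L : A) (iota : forall i, Hom (dob D i) L),
    is_cocone D L iota /\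
    forall (X : A) (x : forall i, Hom (dob D i) X), is_cocone D X x ->
      exists h : Hom L X, (forall i, h ∘ iota i = x i) /\
        forall h' : Hom L X, (forall i, h' ∘ iota i = x i) -> h' = h.

Definition cocomplete (A : Category) : Prop :=
  forall (J : SmallCategory) (D : Diagram J A), has_colimit D.

Definition terminal_coalgebra (A : Category) (H : Endofunctor A) (C : A)
  (c : Hom C (H C)) : Prop :=
  forall (X : A) (e : Hom X (H X)),
    exists h : Hom X C, c ∘ h = fmap H h ∘ e /\
      forall h' : Hom X C, c ∘ h' = fmap H h' ∘ e -> h' = h.

Record PointedEndofunctor (A : Category) := {
  pf :> Endofunctor A;
  eta : forall X : A, Hom X (pf X);
  eta_nat : forall (X Y : A) (f : Hom X Y), fmap pf f ∘ eta X = eta Y ∘ f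
}.
Arguments eta {A} _ X.

(** Distributive law  lambda : M D -> D M  of (M, eta) over the copointed functor
    (D, eps) = (H × Id, pi1), written out componentwise:
    D X = H X × X,  D f = H f × f,  eps_X = pi1. *)
Definition distributive_law (A : Category) (P : BinProducts A) (H : Endofunctor A)
  (M : PointedEndofunctor A)
  (lam : forall X : A, Hom (M (prod P (H X) X)) (prod P (H (M X)) (M X))) : Prop :=
  (forall (X Y : A) (f : Hom X Y),
      lam Y ∘ fmap M (prod_map P (fmap H f) f)
      = prod_map P (fmap H (fmap M f)) (fmap M f) ∘ lam X) /\
  (* lambda . eta D = D eta *)
  (forall X : A,
      lam X ∘ eta M (prod P (H X) X) = prod_map P (fmap H (eta M X)) (eta M X)) /\
  (* eps M . lambda = M eps *)
  (forall X : A,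
      pi1 P (H (M X)) (M X) ∘ lam X = fmap M (pi1 P (H X) X)).

(** b : M C -> C is the lambda-interpretation: the unique b with
    c . b = H b . pi0 . lambda_C . M <c, id>.  (Uniqueness is automatic by
    terminality of c, so we only record the defining equation.) *)
Definition lambda_interpretation (A : Category) (P : BinProducts A) (H : Endofunctor A)
  (M : PointedEndofunctor A)
  (lam : forall X : A, Hom (M (prod P (H X) X)) (prod P (H (M X)) (M X)))
  (C : A) (c : Hom C (H C)) (b : Hom (M C) C) : Prop :=
  c ∘ b = fmap H b ∘ pi0 P (H (M C)) (M C) ∘ lam C ∘ fmap M (pair P c (idm C)).

Definition completely_iterative (A : Category) (S : BinCoproducts A) (G : Endofunctor A)
  (A0 : A) (a : Hom (G A0) A0) : Prop :=
  forall (X : A) (e : Hom X (coprod S (G X) A0)),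
    exists s : Hom X A0,
      s = copair S a (idm A0) ∘ coprod_map S (fmap G s) (idm A0) ∘ e /\
      forall s' : Hom X A0,
        s' = copair S a (idm A0) ∘ coprod_map S (fmap G s') (idm A0) ∘ e -> s' = s.

Arguments terminal_coalgebra {A} H C c.
Arguments distributive_law {A} P H M lam.
Arguments lambda_interpretation {A} P H M lam C c b.
Arguments completely_iterative {A} S G A0 a.
Arguments has_colimit {J A} D.

(* Main.v *)
Require Import Defs.

Definition discJ : SmallCategory.
Proof.
refine {| sOb := nat; sHom := fun i j => i = j; scomp := fun i j k v u => eq_trans u v;
          sid := fun i => eq_refl |}.
- intros; destruct u, v, w; reflexivity.
- intros; destruct u; reflexivity.
- intros; destruct u; reflexivity.
Defined.

Definition discD (A : Category) (Y : nat -> A) : Diagram discJ A.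
Proof.
refine (@Build_Diagram discJ A Y
  (fun i j (u : i = j) => match u in _ = j return Hom (Y i) (Y j) with eq_refl => idm (Y i) end) _ _).
- reflexivity.
- intros i j k u v; destruct u, v; simpl. rewrite comp_id_l; reflexivity.
Defined.

Lemma countable_coprod (A : Category) (Hc : cocomplete A) (Y : nat -> A) :
  exists (L : A) (iota : forall n, Hom (Y n) L),
    forall (Z : A) (x : forall n, Hom (Y n) Z),
      exists h : Hom L Z, (forall n, h ∘ iota n = x n) /\
        forall h', (forall n, h' ∘ iota n = x n) -> h' = h.
Proof.
  destruct (Hc discJ (discD A Y)) as [L [iota [_ U]]].
  exists L, iota. intros Z x. apply (U Z x).
  intros i j u. destruct u. simpl. apply comp_id_r.
Qed.

Lemma family_unique (A : Category) (Hc : cocomplete A) (H : Endofunctor A) (C : A)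
  (c : Hom C (H C)) (Hterm : terminal_coalgebra H C c) (Y : nat -> A)
  (g : forall n, Hom (Y n) (H (Y (S n)))) :
  exists k : forall n, Hom (Y n) C,
    (forall n, c ∘ k n = fmap H (k (S n)) ∘ g n) /\
    forall k' : forall n, Hom (Y n) C,
      (forall n, c ∘ k' n = fmap H (k' (S n)) ∘ g n) -> forall n, k' n = k n.
Proof.
  destruct (countable_coprod A Hc Y) as [L [iota U]].
  destruct (U (H L) (fun n => fmap H (iota (S n)) ∘ g n)) as [gam [Hgam _]].
  destruct (Hterm L gam) as [h [Hh Huniq]].
  exists (fun n => h ∘ iota n). split.
  - intros n. rewrite comp_assoc, Hh, <- comp_assoc, Hgam, comp_assoc, <- fmap_comp. reflexivity.
  - intros k' Hk' n.
    destruct (U C k') as [K [HK _]].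
    assert (E : K = h).
    { apply Huniq.
      destruct (U (H C) (fun n => fmap H (k' (S n)) ∘ g n)) as [z [_ Hz]].
      rewrite (Hz (c ∘ K)), (Hz (fmap H K ∘ gam)); auto.
      - intros m. rewrite <- comp_assoc, Hgam, comp_assoc, <- fmap_comp, HK. reflexivity.
      - intros m. rewrite <- comp_assoc, HK. apply Hk'. }
    rewrite <- E. symmetry. apply HK.
Qed.
Set Implicit Arguments.
Unset Strict Implicit.

Fixpoint Yc (A : Category) (M : PointedEndofunctor A) (X : A) (n : nat) : A :=
  match n with 0 => X | S m => M (Yc M X m) end.

Fixpoint gc (A : Category) (P : BinProducts A) (H : Endofunctor A) (M : PointedEndofunctor A)
  (lam : forall X : A, Hom (M (prod P (H X) X)) (prod P (H (M X)) (M X)))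
  (X : A) (f : Hom X (H (M X))) (n : nat) : Hom (Yc M X n) (H (Yc M X (S n))) :=
  match n as n return Hom (Yc M X n) (H (Yc M X (S n))) with
  | 0 => f
  | S m => pi0 P _ _ ∘ lam (Yc M X (S m))
             ∘ fmap M (pair P (@gc A P H M lam X f m) (eta M (Yc M X m)))
  end.

Lemma pair_comp (A : Category) (P : BinProducts A) (Z W X Y : A) (u : Hom W Z) (f : Hom Z X) (g : Hom Z Y) :
  pair P f g ∘ u = pair P (f ∘ u) (g ∘ u).
Proof.
  apply pair_uniq; rewrite comp_assoc; [rewrite pair_pi0 | rewrite pair_pi1]; reflexivity.
Qed.

Lemma prod_map_pair (A : Category) (P : BinProducts A) (Z X X' Y Y' : A) (a : Hom X X') (b : Hom Y Y')
  (f : Hom Z X) (g : Hom Z Y) :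
  prod_map P a b ∘ pair P f g = pair P (a ∘ f) (b ∘ g).
Proof.
  unfold prod_map. rewrite pair_comp, <- !comp_assoc, pair_pi0, pair_pi1. reflexivity.
Qed.

Lemma pi0_prod_map (A : Category) (P : BinProducts A) (X X' Y Y' : A) (a : Hom X X') (b : Hom Y Y') :
  pi0 P X' Y' ∘ prod_map P a b = a ∘ pi0 P X Y.
Proof. unfold prod_map. apply pair_pi0. Qed.

Lemma rwh (A : Category) (X Y Z W : A) (a : Hom Y Z) (b : Hom X Y) (d : Hom X Z) :
  a ∘ b = d -> forall r : Hom W X, a ∘ (b ∘ r) = d ∘ r.
Proof. intros E r. rewrite comp_assoc, E. reflexivity. Qed.

Ltac ra := repeat rewrite <- comp_assoc.
Ltac rw1 E := first [rewrite (rwh E) | rewrite (rwh (E _)) | rewrite (rwh (E _ _)) | rewrite (rwh (E _ _ _)) | rewrite (rwh (E _ _ _ _)) | rewrite (rwh (E _ _ _ _ _)) | rewrite (rwh (E _ _ _ _ _ _)) | rewrite (rwh (E _ _ _ _ _ _ _)) | rewrite (rwh (E _ _ _ _ _ _ _ _)) | rewrite (rwh (E _ _ _ _ _ _ _ _ _)) | rewrite (rwh (E _ _ _ _ _ _ _ _ _ _)) | rewrite (rwh (E _ _ _ _ _ _ _ _ _ _ _)) | rewrite E].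
Ltac rwb1 E := first [rewrite (rwh (eq_sym E)) | rewrite (rwh (eq_sym (E _))) | rewrite (rwh (eq_sym (E _ _))) | rewrite (rwh (eq_sym (E _ _ _))) | rewrite (rwh (eq_sym (E _ _ _ _))) | rewrite (rwh (eq_sym (E _ _ _ _ _))) | rewrite (rwh (eq_sym (E _ _ _ _ _ _))) | rewrite (rwh (eq_sym (E _ _ _ _ _ _ _))) | rewrite (rwh (eq_sym (E _ _ _ _ _ _ _ _))) | rewrite (rwh (eq_sym (E _ _ _ _ _ _ _ _ _))) | rewrite (rwh (eq_sym (E _ _ _ _ _ _ _ _ _ _))) | rewrite (rwh (eq_sym (E _ _ _ _ _ _ _ _ _ _ _))) | rewrite <- E].
Tactic Notation "rw" constr(E) := ra; rw1 E; ra.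
Tactic Notation "rw" "<-" constr(E) := ra; rwb1 E; ra.

Lemma b_eta (A : Category) (P : BinProducts A) (H : Endofunctor A) (C : A) (c : Hom C (H C))
  (Hterm : terminal_coalgebra H C c) (M : PointedEndofunctor A)
  (lam : forall X : A, Hom (M (prod P (H X) X)) (prod P (H (M X)) (M X)))
  (Hlam : distributive_law P H M lam)
  (b : Hom (M C) C) (Hb : lambda_interpretation P H M lam C c b) :
  b ∘ eta M C = idm C.
Proof.
  destruct Hlam as [Hnat [Heta Heps]]. unfold lambda_interpretation in Hb.
  destruct (Hterm C c) as [h [_ U]].
  rewrite (U (idm C)), (U (b ∘ eta M C)); auto.
  - rw Hb. rw eta_nat. rw Heta. rw prod_map_pair. rw pair_pi0. ra. rewrite (rwh (eq_sym (fmap_comp _ _ _))). reflexivity.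
  - rewrite fmap_id, comp_id_l, comp_id_r. reflexivity.
Qed.

Lemma core (A : Category) (P : BinProducts A) (Hc : cocomplete A)
  (H : Endofunctor A) (C : A) (c : Hom C (H C))
  (Hterm : terminal_coalgebra H C c)
  (M : PointedEndofunctor A)
  (lam : forall X : A, Hom (M (prod P (H X) X)) (prod P (H (M X)) (M X)))
  (Hlam : distributive_law P H M lam)
  (b : Hom (M C) C) (Hb : lambda_interpretation P H M lam C c b)
  (X : A) (f : Hom X (H (M X))) :
  exists s : Hom X C, c ∘ s = fmap H (b ∘ fmap M s) ∘ f /\
    forall s', c ∘ s' = fmap H (b ∘ fmap M s') ∘ f -> s' = s.
Proof.
  pose proof (b_eta Hterm Hlam Hb) as Hbe.
  destruct Hlam as [Hnat [Heta Heps]]. unfold lambda_interpretation in Hb.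
  set (Y := Yc M X). set (g := @gc A P H M lam X f).
  assert (STEP : forall n (u : Hom (Y n) C) (v : Hom (Y (S n)) C),
     c ∘ u = fmap H v ∘ g n -> u = v ∘ eta M (Y n) ->
     c ∘ (b ∘ fmap M u) = fmap H (b ∘ fmap M v) ∘ g (S n)).
  { intros n u v Hu1 Hu2.
    assert (E : pair P c (idm C) ∘ u = prod_map P (fmap H v) v ∘ pair P (g n) (eta M (Y n))).
    { rewrite prod_map_pair, pair_comp, comp_id_l, Hu1. rewrite Hu2. reflexivity. }
    rw Hb. rw <- fmap_comp. rewrite E, fmap_comp. rw Hnat. rw pi0_prod_map.
    rewrite !fmap_comp. unfold g; simpl. ra. reflexivity. }
  destruct (family_unique A Hc H C c Hterm Y g) as [k [Hk Uk]].
  assert (Keta : forall n, k n = k (S n) ∘ eta M (Y n)).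
  { intros n. symmetry. apply (Uk (fun n => k (S n) ∘ eta M (Y n))). intros m. simpl.
    rw Hk. unfold g at 1; simpl; fold g. rw eta_nat. rw Heta. rw pi0_prod_map. rw pair_pi0. rw <- fmap_comp. reflexivity. }
  destruct (family_unique A Hc H C c Hterm (fun n => Y (S n)) (fun n => g (S n))) as [k2 [Hk2 Uk2]].
  assert (Kb : forall n, k (S n) = b ∘ fmap M (k n)).
  { intros n. rewrite (Uk2 (fun n => k (S n))), (Uk2 (fun n => b ∘ fmap M (k n))); auto.
    intros m. apply STEP; auto. }
  exists (k 0). split.
  - etransitivity; [exact (Hk 0)|]. rewrite (Kb 0). reflexivity.
  - intros s' Hs'.
    set (q := fix q n : Hom (Y n) C := match n with 0 => s' | S m => b ∘ fmap M (q m) end).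
    assert (Q : forall n, c ∘ q n = fmap H (q (S n)) ∘ g n /\ q n = q (S n) ∘ eta M (Y n)).
    { induction n as [|n [IH1 IH2]].
      - split; [exact Hs'|]. simpl. rw eta_nat. rw Hbe. rewrite comp_id_l. reflexivity.
      - split.
        + apply STEP; auto.
        + simpl. rw eta_nat. rw Hbe. rewrite comp_id_l. reflexivity. }
    apply (Uk q (fun n => proj1 (Q n)) 0).
Qed.
Set Implicit Arguments.
Unset Strict Implicit.

Lemma comp_copair (A : Category) (S : BinCoproducts A) (X Y Z W : A)
  (f : Hom X Z) (g : Hom Y Z) (h : Hom Z W) :
  h ∘ copair S f g = copair S (h ∘ f) (h ∘ g).
Proof. apply copair_uniq; rw copair_inl || rw copair_inr; reflexivity. Qed.

Lemma copair_ext (A : Category) (S : BinCoproducts A) (X Y Z : A) (h h' : Hom (coprod S X Y) Z) :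
  h ∘ inl S X Y = h' ∘ inl S X Y -> h ∘ inr S X Y = h' ∘ inr S X Y -> h = h'.
Proof.
  intros E1 E2. transitivity (copair S (h ∘ inl S X Y) (h ∘ inr S X Y)).
  - apply copair_uniq; reflexivity.
  - symmetry. apply copair_uniq; symmetry; assumption.
Qed.

Unset Implicit Arguments.
Set Strict Implicit.

Theorem mainTheorem18
  (A : Category) (P : BinProducts A) (S : BinCoproducts A)
  (Hcocomplete : cocomplete A)
  (H : Endofunctor A) (C : A) (c : Hom C (H C))
  (Hterm : terminal_coalgebra H C c)
  (cinv : Hom (H C) C) (Hcinv1 : cinv ∘ c = idm C) (Hcinv2 : c ∘ cinv = idm (H C))
  (M : PointedEndofunctor A)
  (lam : forall X : A, Hom (M (prod P (H X) X)) (prod P (H (M X)) (M X)))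
  (Hlam : distributive_law P H M lam)
  (b : Hom (M C) C) (Hb : lambda_interpretation P H M lam C c b) :
  completely_iterative S (CompFunctor H M) C (cinv ∘ fmap H b).
Proof.
  pose proof (b_eta Hterm Hlam Hb) as Hbe.
  intros X e.
  assert (CH : forall s : Hom X C,
     s = copair S (cinv ∘ fmap H b) (idm C) ∘ coprod_map S (fmap (CompFunctor H M) s) (idm C) ∘ e
     <-> c ∘ s = copair S (fmap H (b ∘ fmap M s)) c ∘ e).
  { intros s. unfold coprod_map. rewrite comp_copair. rw copair_inl. rw copair_inr.
    rewrite comp_id_l. simpl.
    split.
    - intros E. pose proof (f_equal (fun z => c ∘ z) E) as E2. cbv beta in E2. rewrite E2. rw comp_copair. rw Hcinv2. rewrite comp_id_l, comp_id_r, fmap_comp. ra.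
      reflexivity.
    - intros E. transitivity (cinv ∘ (c ∘ s)); [rewrite comp_assoc, Hcinv1, comp_id_l; reflexivity|].
      rewrite E. rw comp_copair. rewrite fmap_comp, Hcinv1. ra. reflexivity. }

  set (w := fmap H (fmap M (inr S X C)) ∘ fmap H (eta M C) ∘ c).
  set (f' := copair S (copair S (fmap H (fmap M (inl S X C))) w ∘ e) w).
  assert (W : forall t : Hom (coprod S X C) C, t ∘ inr S X C = idm C -> fmap H (b ∘ fmap M t) ∘ w = c).
  { intros t Ht. unfold w. rw <- fmap_comp. rw <- fmap_comp. rw <- fmap_comp.
    rewrite Ht, !fmap_id, comp_id_l, Hbe, fmap_id, comp_id_l. reflexivity. }
  assert (F1 : forall t : Hom (coprod S X C) C, t ∘ inr S X C = idm C ->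
     fmap H (b ∘ fmap M t) ∘ f' ∘ inl S X C = copair S (fmap H (b ∘ fmap M (t ∘ inl S X C))) c ∘ e).
  { intros t Ht. unfold f'. rw copair_inl. rw comp_copair. rewrite (W t Ht).
    rewrite !fmap_comp. ra. reflexivity. }
  assert (F2 : forall t : Hom (coprod S X C) C, t ∘ inr S X C = idm C ->
     fmap H (b ∘ fmap M t) ∘ f' ∘ inr S X C = c).
  { intros t Ht. unfold f'. rw copair_inr. apply W; auto. }
  destruct (core Hcocomplete Hterm Hlam Hb f') as [s0 [Hs0 U0]].
  assert (I0 : s0 ∘ inr S X C = idm C).
  { destruct (Hterm C c) as [h [_ Uh]].
    rewrite (Uh (idm C)), (Uh (s0 ∘ inr S X C)); auto.
    - rewrite comp_assoc, Hs0. unfold f'. rw copair_inr. unfold w.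
      rw <- fmap_comp. rw <- fmap_comp. rw <- fmap_comp. rewrite (eta_nat M (s0 ∘ inr S X C)). rw Hbe. rewrite comp_id_l. reflexivity.
    - rewrite fmap_id, comp_id_l, comp_id_r. reflexivity. }
  exists (s0 ∘ inl S X C). split.
  - apply CH. rewrite comp_assoc, Hs0. rewrite F1; auto.
  - intros s' Hs'. apply CH in Hs'.
    set (t := copair S s' (idm C)).
    assert (Tl : t ∘ inl S X C = s') by apply copair_inl.
    assert (Tr : t ∘ inr S X C = idm C) by apply copair_inr.
    assert (Et : t = s0).
    { apply U0. apply copair_ext.
      - rewrite F1, Tl; auto. ra. rewrite Tl. exact Hs'.
      - rewrite F2; auto. ra. rewrite Tr, comp_id_r. reflexivity. }
    rewrite <- Et. symmetry; exact Tl.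
Qed.
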